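(* Let $q\ge2$, $t,b\ge1$ and $n\ge bt+1$. Then \[ d_{q,b}(n,t)=\sum_{i=0}^{q-1}d_{q,b}(n-ib-1,t-i). \]
   Context: $\Sigma_q=\{0,\ldots,q-1\}$. A $b$-burst-deletion at position $i\in[1,n-b+1]$ transforms $x_1\cdots x_n$ into $x_1\cdots x_{i-1}x_{i+b}\cdots x_n$. For $n\ge tb+1$, $t\ge0$, $\mathcal{D}_{t,b}(\boldsymbol{x})$ is the set of all length-$(n-tb)$ sequences obtainable from $\boldsymbol{x}$ by $t$ successive $b$-burst-deletions ($\mathcal{D}_{0,b}(\boldsymbol{x})=\{\boldsymbol{x}\}$). The $b$-cyclic sequence $\boldsymbol{X}^{\sigma}_{m,q,b}=X_1\cdots X_m$ has $X_i\equiv\sigma+\lfloor (i-1)/b\rfloor\pmod q$. For $m\ge bs+1$, $s\ge0$, $d_{q,b}(m,s):=|\mathcal{D}_{s,b}(\boldsymbol{X}^0_{m,q,b})|$; $d_{q,b}(m,s)=1$ if $m=bs\ge0$, and $d_{q,b}(m,s)=0$ if $m<bs$ or $s<0$. *)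

(* Defs.v *)
From mathcomp Require Import all_boot all_order all_algebra.
Set Implicit Arguments. Unset Strict Implicit. Unset Printing Implicit Defensive.
Import Order.TTheory GRing.Theory Num.Theory.

(* Sequences over Sigma_q are represented as seq nat (entries in [0, q-1]). *)

(* b-burst-deletion at position i (1-based, i in [1, n-b+1]):
   x_1..x_{i-1} x_{i+b} .. x_n *)
Definition burst_del (b i : nat) (x : seq nat) : seq nat :=
  take i.-1 x ++ drop (i.-1 + b) x.

Definition burst_dels1 (b : nat) (x : seq nat) : seq (seq nat) :=
  [seq burst_del b i x | i <- iota 1 ((size x).+1 - b)].

(* D_{t,b}(x) as a list (possibly with repetitions) of all results of t
   successive b-burst-deletions; D_{0,b}(x) = {x}. *)
Fixpoint burstD (t b : nat) (x : seq nat) : seq (seq nat) :=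
  match t with
  | 0 => [:: x]
  | t'.+1 => flatten [seq burstD t' b y | y <- burst_dels1 b x]
  end.

(* The b-cyclic sequence X^sigma_{m,q,b}: X_i = sigma + floor((i-1)/b) mod q. *)
Definition cyc_seq (sigma m q b : nat) : seq nat :=
  mkseq (fun j => (sigma + j %/ b) %% q) m.

Definition dqb (q b : nat) (m s : int) : nat :=
  if (s < 0)%R then 0
  else if (m < (b%:Z * s))%R then 0
  else if m == (b%:Z * s)%R then 1
  else size (undup (burstD `|s|%N b (cyc_seq 0 `|m|%N q b))).

(* Main.v *)
Require Import Defs.
From mathcomp Require Import all_boot all_order all_algebra.
Import Order.TTheory GRing.Theory Num.Theory.
From mathcomp Require Import zify.

Section D.
Variable b : nat.

Lemma memD1 t x y : y \in burstD t.+1 b x <->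
  exists p, p + b <= size x /\ y \in burstD t b (take p x ++ drop (p + b) x).
Proof.
split.
- move=> /flatten_mapP [z /mapP [i]]; rewrite mem_iota => /andP [h1 h2] -> hy.
  exists i.-1; split; first by lia.
  exact: hy.
- move=> [p [hp hy]]; apply/flatten_mapP.
  exists (burst_del b p.+1 x) => //.
  apply/mapP; exists p.+1 => //; rewrite mem_iota; apply/andP; split; lia.
Qed.

Lemma size_D t x y : y \in burstD t b x -> size y + t * b = size x.
Proof.
elim: t x y => [|t IH] x y.
  by rewrite /= mem_seq1 => /eqP ->; rewrite addn0.
move=> /memD1 [p [hp /IH]]; rewrite size_cat size_take size_drop.
case: ifP => h; lia.
Qed.

Lemma D_ne t x : t * b <= size x -> exists y, y \in burstD t b x.
Proof.
elim: t x => [|t IH] x h.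
  by exists x; rewrite /= mem_seq1.
have [y hy] : exists y, y \in burstD t b (drop b x).
  apply: IH; rewrite size_drop; lia.
exists y; apply/memD1; exists 0; split; first by lia.
by rewrite take0 add0n.
Qed.

Lemma D_cons t w y c : y \in burstD t b w -> c :: y \in burstD t b (c :: w).
Proof.
elim: t w y => [|t IH] w y.
  by rewrite /= !mem_seq1 => /eqP ->.
move=> /memD1 [p [hp hy]]; apply/memD1; exists p.+1; split => /=; first by lia.
exact: IH.
Qed.

Lemma D_dropkb j t w y : j * b <= size w ->
  y \in burstD t b (drop (j * b) w) -> y \in burstD (t + j) b w.
Proof.
elim: j w y => [|j IH] w y hs.
  by rewrite mul0n drop0 addn0.
have -> : drop (j.+1 * b) w = drop (j * b) (drop b w) by rewrite drop_drop mulSn addnC.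
move=> /IH hy; rewrite addnS; apply/memD1; exists 0; split; first by lia.
rewrite take0 add0n; apply: hy; rewrite size_drop; lia.
Qed.

Lemma drop_cat_le (T : Type) n (s1 s2 : seq T) : n <= size s1 ->
  drop n (s1 ++ s2) = drop n s1 ++ s2.
Proof.
move=> h; rewrite drop_cat; case: ltnP => h2 //.
have -> : n = size s1 by lia.
by rewrite subnn drop0 drop_size.
Qed.

Lemma F1 t x c y' : c :: y' \in burstD t b x ->
  exists k, [/\ k <= t, k * b < size x, c = nth 0 x (k * b) &
     y' \in burstD (t - k) b (drop (k * b).+1 x)].
Proof.
elim: t x c y' => [|t IH] x c y'.
  rewrite /= mem_seq1 => /eqP <-; exists 0; rewrite mul0n /= drop0 mem_seq1.
  by split.
move=> /memD1 [p [hp /IH [k [hk hkb hc hy]]]].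
have hsz : size (take p x ++ drop (p + b) x) = size x - b.
  rewrite size_cat size_take size_drop; case: ifP; lia.
have hpx : p <= size x by lia.
rewrite hsz in hkb.
case: (ltnP (k * b) p) => hkp.
- exists k; split; first by lia.
  + lia.
  + rewrite hc nth_cat (size_takel hpx); case: ifP => h; last by lia.
    by rewrite nth_take.
  + have -> : t.+1 - k = (t - k).+1 by lia.
    apply/memD1; exists (p - (k * b).+1); split.
      rewrite size_drop; lia.
    move: hy; rewrite drop_cat_le; last by rewrite (size_takel hpx); lia.
    rewrite drop_drop.
    have -> : p - (k * b).+1 + b + (k * b).+1 = p + b by lia.
    suff -> : drop (k * b).+1 (take p x) = take (p - (k * b).+1) (drop (k * b).+1 x) by [].
    by rewrite take_drop subnK.
- exists k.+1; split; first by lia.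
  + rewrite mulSn; lia.
  + rewrite hc nth_cat (size_takel hpx); case: ifP => h; first by lia.
    rewrite nth_drop; congr nth; rewrite mulSn; lia.
  + move: hy; rewrite drop_cat (size_takel hpx); case: ifP => h; first by lia.
    rewrite drop_drop subSS.
    have -> : (k * b).+1 - p + (p + b) = (k.+1 * b).+1 by rewrite mulSn; lia.
    by [].
Qed.

End D.

Section Z.
Variables q b : nat.
Hypothesis hb : 0 < b.
Hypothesis hq : 0 < q.

Definition zs r s m := mkseq (fun j => (s + (j + r) %/ b) %% q) m.
Definition G r sg m s := size (undup (burstD s b (zs r sg m))).

Lemma size_zs r sg m : size (zs r sg m) = m.
Proof. by rewrite size_mkseq. Qed.

Lemma nth_zs r sg m j : j < m -> nth 0 (zs r sg m) j = (sg + (j + r) %/ b) %% q.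
Proof. by move=> h; rewrite nth_mkseq. Qed.

Lemma drop_zs r sg m k :
  drop (k * b).+1 (zs r sg m) = zs r.+1 (sg + k) (m - (k * b).+1).
Proof.
apply: (@eq_from_nth _ 0); first by rewrite size_drop !size_zs.
move=> i; rewrite size_drop size_zs => hi.
rewrite nth_drop !nth_zs; try lia.
have -> : (k * b).+1 + i + r = k * b + (i + r.+1) by lia.
by rewrite divnMDl // addnA.
Qed.

Lemma uniq_size_le (T : eqType) (l : seq T) e :
  (forall y, y \in l -> y = e) -> size (undup l) <= 1.
Proof.
move=> h; have := @uniq_leq_size _ (undup l) [:: e] (undup_uniq l).
apply => y; rewrite mem_undup mem_seq1 => /h ->; by [].
Qed.

Lemma G_base r sg m s : m <= s * b -> G r sg m s = (m == s * b).
Proof.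
move=> hm; rewrite /G; case: eqP => he.
- have [y hy] : exists y, y \in burstD s b (zs r sg m) by apply: D_ne; rewrite size_zs; lia.
  apply/eqP; rewrite eqn_leq; apply/andP; split.
    apply: (@uniq_size_le _ _ [::]) => z /size_D; rewrite size_zs => hz.
    by apply/eqP; rewrite -size_eq0; apply/eqP; lia.
  by case: (undup _) (mem_undup (burstD s b (zs r sg m)) y) => //; rewrite hy.
- apply/eqP; rewrite size_eq0; apply/eqP.
  case E: (undup _) => [|z l] //.
  have := mem_head z l; rewrite -E mem_undup => /size_D; rewrite size_zs; lia.
Qed.

Lemma count_partition (A : eqType) (s : seq A) (P : nat -> pred A) n :
  (forall y, y \in s -> \sum_(k < n) P k y = 1) ->
  \sum_(k < n) count (P k) s = size s.
Proof.
elim: s => [|y s IH] h /=; first by rewrite big1.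
rewrite big_split /= h ?mem_head //.
by rewrite IH // => z hz; apply: h; rewrite in_cons hz orbT.
Qed.

Lemma mod_uniq t k k' : k < q -> ((t + k') %% q == (t + k) %% q) = (k == k' %% q).
Proof.
move=> hk; rewrite eqn_modDl (modn_small hk) eq_sym; by [].
Qed.

Lemma sum_ind (a : nat) : a < q -> \sum_(k < q) (k == a :> nat) = 1.
Proof.
move=> ha; rewrite (bigD1 (Ordinal ha)) //= eqxx big1 // => i /eqP hi.
apply/eqP; rewrite eqb0; apply/eqP => e; apply: hi; exact: val_inj.
Qed.

Lemma headP r sg m s k y : k < q -> y \in burstD s b (zs r sg m) ->
  y != [::] -> head 0 y == (sg + r %/ b + k) %% q ->
  k <= s /\ behead y \in burstD (s - k) b (drop (k * b).+1 (zs r sg m)).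
Proof.
move=> hk; case: y => [|c y'] // hy _ /= /eqP hc.
have [k' [hk' hkb hc' hy']] := @F1 b _ _ _ _ hy.
move: hc'; rewrite size_zs in hkb; rewrite nth_zs // divnMDl // hc [k' + _]addnC addnA.
move=> /eqP; rewrite eq_sym mod_uniq // => /eqP ek.
have [j hkk] : exists j, k' = k + j * q by exists (k' %/ q); rewrite ek addnC -divn_eq.
split; first by lia.
have := @D_dropkb b (j * q) (s - k') (drop (k * b).+1 (zs r sg m)) y'.
have -> : s - k' + j * q = s - k by lia.
apply; first by rewrite size_drop size_zs; nia.
by rewrite drop_drop; have -> : j * q * b + (k * b).+1 = (k' * b).+1 by nia.
Qed.

Lemma Rec r sg m s : s * b < m ->
  G r sg m s = \sum_(k < q) (if k <= s then G r.+1 (sg + k) (m - (k * b).+1) (s - k) else 0).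
Proof.
move=> hm; set x := zs r sg m; set S := undup (burstD s b x).
have ne : forall y, y \in S -> y != [::].
  move=> y; rewrite mem_undup => /size_D; rewrite size_zs; case: y => //=; lia.
rewrite /G -/x -/S -(@count_partition _ S (fun k y => head 0 y == (sg + r %/ b + k) %% q) q).
  apply: eq_bigr => [[k hk]] _ /=; rewrite -drop_zs -/x.
  case: ifP => hks.
  - rewrite -size_filter -[in RHS](size_map (cons ((sg + r %/ b + k) %% q))); apply: perm_size; apply: uniq_perm.
    + by apply: filter_uniq; apply: undup_uniq.
    + rewrite map_inj_uniq ?undup_uniq // => u v [] //.
    move=> y; rewrite mem_filter mem_undup; apply/andP/mapP.
    * move=> [hh hy]; have := @headP _ _ _ _ _ _ hk hy (ne y _) hh.
      rewrite /S mem_undup => /(_ hy) [_ hy']; exists (behead y); first by rewrite mem_undup.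
      move: hh (ne y); rewrite /S mem_undup => /[swap] /(_ hy).
      by case: y {hy hy'} => //= c y' _ /eqP ->.
    * move=> [y']; rewrite mem_undup => hy' ->; split => /=; first by [].
      have hkm : k * b < size x by rewrite size_zs; nia.
      have := @D_dropkb b k (s - k) x (nth 0 x (k * b) :: y') ltac:(lia).
      rewrite subnK // => h1.
      have : nth 0 x (k * b) :: y' \in burstD s b x.
        apply: h1; rewrite (drop_nth 0 hkm); exact: D_cons.
      suff -> : nth 0 x (k * b) = (sg + r %/ b + k) %% q by [].
      rewrite nth_zs; last by rewrite size_zs in hkm.
      by rewrite divnMDl // [k + _]addnC addnA.
  - apply/eqP; rewrite eqn0Ngt -has_count; apply/hasPn => y hy; apply/negP => hh.
    move: (hy); rewrite mem_undup => hy'.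
    have [h1 _] := @headP _ _ _ _ _ _ hk hy' (ne y hy) hh; lia.
move=> y hy.
move: (hy); rewrite mem_undup => hy'; have := ne y hy.
case: y hy hy' => // c y' _ hy' _ /=.
have [k' [_ hkb hc _]] := @F1 b _ _ _ _ hy'.
rewrite size_zs in hkb; rewrite hc nth_zs //.
rewrite divnMDl // [k' + _]addnC addnA.
under eq_bigr => i _ do rewrite (mod_uniq _ _ _ (ltn_ord i)).
exact: sum_ind (ltn_pmod _ hq).
Qed.

End Z.

Lemma G_inv q b : 0 < b -> 0 < q -> forall m r sg s, G q b r sg m s = G q b 0 0 m s.
Proof.
move=> hb hq; elim/ltn_ind => m IH r sg s.
case: (leqP m (s * b)) => hm; first by rewrite !G_base.
rewrite !Rec //; apply: eq_bigr => [[k hk]] _ /=; case: ifP => // _.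
by rewrite IH ?(IH _ _ 1) //; lia.
Qed.

Lemma dqb_nat q b m s : 0 < b -> 0 < q -> dqb q b m%:Z s%:Z = G q b 0 0 m s.
Proof.
move=> hb hq; rewrite /dqb /= -PoszM ltz_nat eqz_nat ?absz_nat.
have -> : cyc_seq 0 m q b = zs q b 0 0 m by apply: eq_mkseq => j; rewrite addn0.
case: ltnP => h1; first by rewrite G_base ?(mulnC s) //; [case: eqP => //; lia | lia].
case: eqP => h2; first by rewrite G_base ?(mulnC s) //; [case: eqP => //; lia | lia].
by [].
Qed.

Theorem lemma4p8 (q b t n : nat) :
  2 <= q -> 1 <= t -> 1 <= b -> b * t + 1 <= n ->
  dqb q b n%:Z t%:Z =
  \sum_(i < q) dqb q b (n%:Z - (i * b)%:Z - 1)%R (t%:Z - i%:Z)%R.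
Proof.
move=> hq ht hb hn.
have hq0 : 0 < q by lia.
rewrite dqb_nat // Rec //; last by lia.
apply: eq_bigr => [[i hi]] _ /=; case: ifP => hit.
- have -> : (n%:Z - (i * b)%:Z - 1)%R = Posz (n - (i * b).+1) by nia.
  have -> : (t%:Z - i%:Z)%R = Posz (t - i) by lia.
  by rewrite dqb_nat // G_inv.
- rewrite /dqb; have -> : (t%:Z - i%:Z < 0)%R by lia.
  by [].
Qed.
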